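(* Let $\mathcal{L}$ be a distributive abstract logic and define $a\le b$ iff $S_a\subseteq S_b$ for $a,b\in Expr_{\mathcal{L}}$, where $S_a=\{P\in PTh_{\mathcal{L}}: a\in P\}$. Then $(Expr_{\mathcal{L}},\le)$ is a distributive lattice with $\inf\{a,b\}=a\wedge b$ and $\sup\{a,b\}=a\vee b$; if $\mathcal{L}$ is bounded, it is a bounded lattice with least element $\bot$ and greatest element $\top$.
   Context: An abstract logic is a triple $\mathcal{L}=(Expr_{\mathcal{L}},Th_{\mathcal{L}},\mathcal{C}_{\mathcal{L}})$ where $Expr_{\mathcal{L}}$ is a set, $Th_{\mathcal{L}}$ a non-empty set of subsets of $Expr_{\mathcal{L}}$ (theories) closed under intersections of non-empty subfamilies, and $\mathcal{C}_{\mathcal{L}}$ a set of operations on $Expr_{\mathcal{L}}$. $\mathcal{L}$ is closed under union of chains if the union of every non-empty chain of theories is a theory. A theory $T$ is prime if $T=\bigcap\mathcal{T}$ with $\mathcal{T}\subseteq Th_{\mathcal{L}}$ non-empty finite implies $T\in\mathcal{T}$; totally prime if this holds for non-empty $\mathcal{T}$ of any size. $PTh_{\mathcal{L}}$, $TPTh_{\mathcal{L}}$ denote these sets. A distributive abstract logic is one closed under union of chains with binary connectives $\vee,\wedge$ such that for all $a,b$ and all $T\in TPTh_{\mathcal{L}}$: $a\vee b\in T$ iff $a\in T$ or $b\in T$; $a\wedge b\in T$ iff $a,b\in T$. It is bounded if moreover there are formulas $\top$ belonging to every theory and $\bot$ belonging to no theory. The paper treats elements $a,b$ with $a\le b$ and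 $b\le a$ as equal (equality $=_{\le}$ induced by the order). *)

(* Defs.v *)
From Stdlib Require Import List.

Section AbstractLogic.
Variable E : Type.

Definition bigcap (F : (E -> Prop) -> Prop) : E -> Prop :=
  fun x => forall T, F T -> T x.
Definition bigcup (F : (E -> Prop) -> Prop) : E -> Prop :=
  fun x => exists T, F T /\ T x.
Definition subset (A B : E -> Prop) : Prop := forall x, A x -> B x.
Definition nonempty_fam (F : (E -> Prop) -> Prop) : Prop := exists T, F T.
Definition finite_fam (F : (E -> Prop) -> Prop) : Prop :=
  exists l : list (E -> Prop), forall T, F T <-> In T l.
Definition subfam (F G : (E -> Prop) -> Prop) : Prop := forall T, F T -> G T.

(* (Expr, Th) part of an abstract logic: Th non-empty and closed under
   intersections of non-empty subfamilies. *)
Definition is_abstract_logic (Th : (E -> Prop) -> Prop) : Prop :=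
  nonempty_fam Th /\
  forall F, nonempty_fam F -> subfam F Th -> Th (bigcap F).

Definition is_chain (F : (E -> Prop) -> Prop) : Prop :=
  forall T U, F T -> F U -> subset T U \/ subset U T.

Definition closed_union_chains (Th : (E -> Prop) -> Prop) : Prop :=
  forall F, nonempty_fam F -> subfam F Th -> is_chain F -> Th (bigcup F).

Definition prime_theory (Th : (E -> Prop) -> Prop) (T : E -> Prop) : Prop :=
  Th T /\ forall F, subfam F Th -> nonempty_fam F -> finite_fam F ->
    T = bigcap F -> F T.

Definition totally_prime_theory (Th : (E -> Prop) -> Prop) (T : E -> Prop)
  : Prop :=
  Th T /\ forall F, subfam F Th -> nonempty_fam F -> T = bigcap F -> F T.

Definition distributive_logic (Th : (E -> Prop) -> Prop)
  (vee wedge : E -> E -> E) : Prop :=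
  is_abstract_logic Th /\ closed_union_chains Th /\
  forall a b T, totally_prime_theory Th T ->
    (T (vee a b) <-> T a \/ T b) /\ (T (wedge a b) <-> T a /\ T b).

Definition bounded_logic (Th : (E -> Prop) -> Prop) (top bot : E) : Prop :=
  (forall T, Th T -> T top) /\ (forall T, Th T -> ~ T bot).

Definition le_L (Th : (E -> Prop) -> Prop) (a b : E) : Prop :=
  forall P, prime_theory Th P -> P a -> P b.

Definition eq_L (Th : (E -> Prop) -> Prop) (a b : E) : Prop :=
  le_L Th a b /\ le_L Th b a.
End AbstractLogic.
Arguments bigcap {E}. Arguments bigcup {E}. Arguments subset {E}. Arguments nonempty_fam {E}. Arguments finite_fam {E}. Arguments subfam {E}. Arguments is_abstract_logic {E}. Arguments is_chain {E}. Arguments closed_union_chains {E}. Arguments prime_theory {E}. Arguments totally_prime_theory {E}. Arguments distributive_logic {E}. Arguments bounded_logic {E}. Arguments le_L {E}. Arguments eq_L {E}.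

(* Main.v *)
Require Import Defs.
From mathcomp Require classical_sets boolp.
From Stdlib Require Import Classical List.

Section S.
Variable E : Type.
Variable Th : (E -> Prop) -> Prop.
Hypothesis HU : closed_union_chains Th.

Lemma sep (T : E -> Prop) (a : E) : Th T -> ~ T a ->
  exists Q, totally_prime_theory Th Q /\ subset T Q /\ ~ Q a.
Proof.
intros HT Ha.
pose (P' := fun V : E -> Prop => Th (fun x => T x \/ V x) /\ ~ (T a \/ V a)).
destruct (@classical_sets.Zorn_bigcup E P') as [A [PA Amax]].
{ intros F FP Ftot.
  destruct (classic (exists V, F V)) as [[V0 FV0]|Fe].
  - pose (G := fun U : E -> Prop => exists V, F V /\ U = (fun x => T x \/ V x)).
    assert (HG : Th (Defs.bigcup G)).
    { apply HU.
      - exists (fun x => T x \/ V0 x); exists V0; auto.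
      - intros U [V [FV ->]]. exact (proj1 (FP V FV)).
      - intros U U' [V [FV ->]] [V' [FV' ->]].
        destruct (Ftot V V' FV FV') as [h|h]; [left|right]; intros x [hx|hx]; auto;
        right; apply h; exact hx. }
    split.
    + replace (fun x => T x \/ classical_sets.bigcup F (fun X => X) x) with (Defs.bigcup G); auto.
      apply boolp.funext; intro x; apply boolp.propext; split.
      * intros [U [[V [FV ->]] hx]]. destruct hx as [hx|hx]; auto. right; exists V; auto.
      * intros [hx|[V FV hx]].
        -- exists (fun x => T x \/ V0 x); split; [exists V0; auto|auto].
        -- exists (fun x => T x \/ V x); split; [exists V; auto|auto].
    + intros [h|[V FV hV]]; [tauto|]. destruct (FP V FV) as [_ h]; tauto.
  - split.
    + replace (fun x => T x \/ classical_sets.bigcup F (fun X => X) x) with T; auto.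
      apply boolp.funext; intro x; apply boolp.propext; split; auto.
      intros [h|[V FV _]]; auto. exfalso; apply Fe; eauto.
    + intros [h|[V FV _]]; auto. apply Fe; eauto. }
destruct PA as [ThA aA].
exists (fun x => T x \/ A x). split; [split; auto|split].
- intros F FTh [U FU] eq.
  apply NNPP; intro nF.
  apply aA.
  assert (H : forall U', F U' -> U' a).
  { intros U' FU'. apply NNPP; intro hU'.
    assert (hsub : subset (fun x => T x \/ A x) U').
    { intros x hx. pose proof (f_equal (fun S => S x) eq) as e; simpl in e. rewrite e in hx. apply hx, FU'. }
    destruct (classic (subset U' (fun x => T x \/ A x))) as [hs|hs].
    - apply nF. replace (fun x => T x \/ A x) with U'; [exact FU'|].
      apply boolp.funext; intro x; apply boolp.propext; split; auto.
    - apply (Amax U').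
      + split; [intros x hx; apply hsub; auto|].
        intro h; apply hs; intros x hx; right; apply h; exact hx.
      + split.
        * replace (fun x => T x \/ U' x) with U'; [apply FTh; exact FU'|].
          apply boolp.funext; intro x; apply boolp.propext; split; auto.
          intros [h|h]; auto; apply hsub; auto.
        * intros [h|h]; auto. }
  assert (H2 : bigcap F a) by (intros U' FU'; apply H, FU').
  pose proof (f_equal (fun S => S a) eq) as e; simpl in e. rewrite <- e in H2. exact H2.
- intros x hx; auto.
- exact aA.
Qed.
End S.

Section P.
Variable E : Type.
Variables (Th : (E -> Prop) -> Prop) (vee wedge : E -> E -> E).
Hypothesis HD : distributive_logic Th vee wedge.


Lemma wedge_P P a b : prime_theory Th P -> (P (wedge a b) <-> P a /\ P b).
Proof.
destruct HD as [_ [HU Hd]]. intros [ThP _].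
split.
- intro h. split; apply NNPP; intro n;
  destruct (sep E Th HU P _ ThP n) as [Q [tQ [sQ nQ]]];
  apply nQ; apply (proj1 (proj2 (Hd a b Q tQ))); apply sQ; exact h.
- intros [ha hb]. apply NNPP; intro n.
  destruct (sep E Th HU P _ ThP n) as [Q [tQ [sQ nQ]]].
  apply nQ; apply (proj2 (Hd a b Q tQ)); split; apply sQ; auto.
Qed.

Lemma vee_P P a b : prime_theory Th P -> (P (vee a b) <-> P a \/ P b).
Proof.
destruct HD as [[_ Hcap] [HU Hd]]. intros [ThP Pp].
split.
- intro h. apply NNPP; intro n.
  assert (na : ~ P a) by tauto. assert (nb : ~ P b) by tauto.
  pose (FA := fun Q => totally_prime_theory Th Q /\ subset P Q /\ Q a).
  pose (FB := fun Q => totally_prime_theory Th Q /\ subset P Q /\ Q b).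
  assert (hQ : forall Q, totally_prime_theory Th Q -> subset P Q -> Q a \/ Q b).
  { intros Q tQ sQ. apply (proj1 (Hd a b Q tQ)). apply sQ, h. }
  assert (neA : nonempty_fam FA).
  { destruct (sep E Th HU P _ ThP nb) as [Q [tQ [sQ nQ]]].
    exists Q. destruct (hQ Q tQ sQ); [split; [exact tQ|split; auto]|contradiction]. }
  assert (neB : nonempty_fam FB).
  { destruct (sep E Th HU P _ ThP na) as [Q [tQ [sQ nQ]]].
    exists Q. destruct (hQ Q tQ sQ); [contradiction|split; [exact tQ|split; auto]]. }
  assert (ThA : Th (bigcap FA)) by (apply Hcap; auto; intros Q [tQ _]; exact (proj1 tQ)).
  assert (ThB : Th (bigcap FB)) by (apply Hcap; auto; intros Q [tQ _]; exact (proj1 tQ)).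
  pose (F := fun U => U = bigcap FA \/ U = bigcap FB).
  assert (eq : P = bigcap F).
  { apply boolp.funext; intro x; apply boolp.propext; split.
    - intros px U [->| ->]; intros Q [_ [sQ _]]; apply sQ, px.
    - intro hx. apply NNPP; intro nx.
      destruct (sep E Th HU P _ ThP nx) as [Q [tQ [sQ nQ]]].
      destruct (hQ Q tQ sQ) as [qa|qb].
      + apply nQ. apply (hx (bigcap FA)); [left; reflexivity|]. split; auto.
      + apply nQ. apply (hx (bigcap FB)); [right; reflexivity|]. split; auto. }
  assert (FP : F P).
  { apply Pp; auto.
    - intros U [->| ->]; auto.
    - exists (bigcap FA); left; reflexivity.
    - exists (bigcap FA :: bigcap FB :: nil). intro U; simpl; unfold F; split.
      + intros [h1|h1]; auto.
      + intros [h1|[h1|[]]]; auto. }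
  destruct FP as [e|e]; rewrite e in na, nb.
  + apply na. intros Q [_ [_ q]]; exact q.
  + apply nb. intros Q [_ [_ q]]; exact q.
- intro h. apply NNPP; intro n.
  destruct (sep E Th HU P _ ThP n) as [Q [tQ [sQ nQ]]].
  apply nQ; apply (proj1 (Hd a b Q tQ)). destruct h; [left|right]; apply sQ; auto.
Qed.
End P.

Theorem lemma3p6 (E : Type) (Th : (E -> Prop) -> Prop) (vee wedge : E -> E -> E)
  (HD : distributive_logic Th vee wedge) :
  (forall a, le_L Th a a) /\
  (forall a b c, le_L Th a b -> le_L Th b c -> le_L Th a c) /\
  (forall a b, le_L Th (wedge a b) a /\ le_L Th (wedge a b) b /\
     forall c, le_L Th c a -> le_L Th c b -> le_L Th c (wedge a b)) /\
  (forall a b, le_L Th a (vee a b) /\ le_L Th b (vee a b) /\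
     forall c, le_L Th a c -> le_L Th b c -> le_L Th (vee a b) c) /\
  (forall a b c, eq_L Th (wedge a (vee b c)) (vee (wedge a b) (wedge a c))) /\
  (forall a b c, eq_L Th (vee a (wedge b c)) (wedge (vee a b) (vee a c))) /\
  (forall top bot : E, bounded_logic Th top bot ->
     forall a, le_L Th bot a /\ le_L Th a top).
Proof.
pose proof (wedge_P E Th vee wedge HD) as W.
pose proof (vee_P E Th vee wedge HD) as V.
unfold eq_L, le_L.
split. auto. split. { intros a b c h1 h2 P H h; apply h2; [exact H|apply h1; assumption]. } split.
{ intros a b; split; [|split].
  - intros P H h; exact (proj1 (proj1 (W P a b H) h)).
  - intros P H h; exact (proj2 (proj1 (W P a b H) h)).
  - intros c h1 h2 P H h; apply (W P a b H). split; [apply h1|apply h2]; assumption. }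
split.
{ intros a b; split; [|split].
  - intros P H h; apply (V P a b H); auto.
  - intros P H h; apply (V P a b H); auto.
  - intros c h1 h2 P H h; destruct (proj1 (V P a b H) h); [apply h1|apply h2]; assumption. }
split.
{ intros a b c; split; intros P H;
  repeat (rewrite (W P _ _ H) || rewrite (V P _ _ H)); tauto. }
split.
{ intros a b c; split; intros P H;
  repeat (rewrite (W P _ _ H) || rewrite (V P _ _ H)); tauto. }
intros top bot [Ht Hb] a; split; intros P [ThP _] h.
- exfalso; exact (Hb P ThP h).
- exact (Ht P ThP).
Qed.
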